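(* Let $n\ge 1$, $i\in\{1,\ldots,n-1\}$, and let $C$ be an almost-$s_i$-stable set of transpositions in $S_n$: $s_i\in C$ and there is a unique transposition $\tau$ with $\tau\in C$ but $s_i\tau s_i\notin C$. Put $C_-=C\setminus\{\tau\}$ and $C_+=C\cup\{s_i\tau s_i\}$ (which are $s_i$-stable). For a set $D$ of transpositions write $H_D^{*s_i}=\{f\in H_D\mid f*s_i=f\}$. If $\tau=(i\leftrightarrow k)$, then $$H_C=H_{C_+}^{*s_i}\oplus (x_i-x_k)H_{C_-}^{*s_i}$$ as an internal direct sum of $\mathbb{C}[t_1,\ldots,t_n]$-submodules of $H$ equipped with the dot action. Otherwise $\tau=(i+1\leftrightarrow k)$, and $$H_C=H_{C_+}^{*s_i}\oplus (x_k-x_{i+1})H_{C_-}^{*s_i}$$ as an internal direct sum of $\mathbb{C}[t_1,\ldots,t_n]$-submodules of $H$ equipped with the dot action.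
   Context: Let $S_n$ be the symmetric group on $\{1,\ldots,n\}$ with $(vw)(j)=v(w(j))$, and $s_i=(i\leftrightarrow i+1)$. Let $H=\mathrm{Fun}(S_n,\mathbb{C}[t_1,\ldots,t_n])$ with pointwise operations; it is a $\mathbb{C}[t_1,\ldots,t_n]$-module via constant functions. The star action (right) is $(f*w)(v;t_1,\ldots,t_n)=f(vw^{-1};t_1,\ldots,t_n)$, and the dot action (left) is $(w\cdot f)(v;t_1,\ldots,t_n)=f(w^{-1}v;t_{w(1)},\ldots,t_{w(n)})$. Let $x_j\in H$ be the function $v\mapsto t_{v(j)}$. For a transposition $\sigma=(a\leftrightarrow b)$, $f\in H$ satisfies condition $\sigma$ if $f-f*\sigma=(x_a-x_b)g$ for some $g\in H$; these form a subring $H_\sigma$, and for a set $D$ of transpositions $H_D=\bigcap_{\sigma\in D}H_\sigma$ (with $H_\varnothing=H$). A set $D$ of transpositions is $s_i$-stable if $s_i\in D$ and $s_iDs_i=D$. *)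

(* Defs.v *)
From mathcomp Require Import all_boot all_algebra all_fingroup.
From mathcomp Require Import mpoly.
From mathcomp Require Import complex.
From mathcomp Require Import Rstruct.
From Stdlib Require Reals.

Set Implicit Arguments.
Unset Strict Implicit.
Unset Printing Implicit Defensive.

Import GRing.Theory.
Local Open Scope ring_scope.

Definition CC : numClosedFieldType := complex Reals.Rdefinitions.R.

(* C[t_1,...,t_n]  (variables indexed 0..n-1: t_{j+1} is 'X_j). *)
Definition Pol (n : nat) := {mpoly CC[n]}.

Definition Hfun (n : nat) := {perm 'I_n} -> Pol n.

(* Paper's product (v w)(j) = v (w j).  MathComp's perm product is
   left-to-right: (s * t) x = t (s x), so v w (paper) = (w * v)%g. *)
Definition pcomp n (v w : {perm 'I_n}) : {perm 'I_n} := (w * v)%g.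

Lemma pcompE n (v w : {perm 'I_n}) j : pcomp v w j = v (w j).
Proof. by rewrite /pcomp permM. Qed.

Definition star n (f : Hfun n) (w : {perm 'I_n}) : Hfun n :=
  fun v => f (pcomp v w^-1).

(* dot action (left): (w . f)(v; t_1..t_n) = f(w^{-1} v; t_{w(1)},...,t_{w(n)});
   msym w p substitutes t_j := t_{w(j)} in p. *)
Definition dot n (w : {perm 'I_n}) (f : Hfun n) : Hfun n :=
  fun v => msym w (f (pcomp w^-1 v)).

Definition xfun n (j : 'I_n) : Hfun n := fun v => 'X_(v j).

Definition is_transposition n (s : {perm 'I_n}) : Prop :=
  exists a b : 'I_n, a != b /\ s = tperm a b.

Definition sat_cond n (a b : 'I_n) (f : Hfun n) : Prop :=
  exists g : Hfun n, forall v,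
    f v - star f (tperm a b) v = (xfun a v - xfun b v) * g v.

Definition inHD n (D : {set {perm 'I_n}}) (f : Hfun n) : Prop :=
  forall (sigma : {perm 'I_n}) (a b : 'I_n),
    sigma \in D -> a != b -> sigma = tperm a b -> sat_cond a b f.

Definition inHD_star n (D : {set {perm 'I_n}}) (s : {perm 'I_n}) (f : Hfun n)
  : Prop := inHD D f /\ (forall v, star f s v = f v).

Definition xdiff_mul n (a b : 'I_n) (A : Hfun n -> Prop) (f : Hfun n) : Prop :=
  exists h, A h /\ forall v, f v = (xfun a v - xfun b v) * h v.

Definition dot_submodule n (A : Hfun n -> Prop) : Prop :=
  [/\ A (fun _ => 0),
      (forall f g, A f -> A g -> A (fun v => f v + g v)),
      (forall (p : Pol n) f, A f -> A (fun v => p * f v))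
    & (forall w f, A f -> A (dot w f))].

Definition internal_direct_sum n (M A B : Hfun n -> Prop) : Prop :=
  [/\ dot_submodule A, dot_submodule B,
      (forall f, M f <-> exists g h, [/\ A g, B h & forall v, f v = g v + h v])
    & (forall f, A f -> B f -> forall v, f v = 0)].

Definition sconj n (s t : {perm 'I_n}) : {perm 'I_n} := (s * t * s)%g.

(* Main.v *)
Require Import Defs.
From mathcomp Require Import all_boot all_algebra all_fingroup.
From mathcomp Require Import mpoly.
From mathcomp Require Import ring.
Import Defs.

Set Implicit Arguments. Unset Strict Implicit.
Import GRing.Theory.
Local Open Scope ring_scope.


Section PolyFacts.
Variable n : nat.
Implicit Types a b c d : 'I_n.

Lemma XB_neq0 a b : a != b -> ('X_a - 'X_b : Pol n) != 0.
Proof.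
move=> ab; apply/eqP => /(congr1 (mcoeff U_(a))).
rewrite mcoeffB !mcoeffXU eqxx eq_sym (negbTE ab) mcoeff0 subr0.
by move/eqP; rewrite oner_eq0.
Qed.

Lemma msymXi (w : {perm 'I_n}) j : msym w ('X_j : Pol n) = 'X_(w j).
Proof. by rewrite /msym mmapX mmap1U. Qed.

Definition subst a b (p : Pol n) : Pol n :=
  mmap (@mpolyC n CC) (fun j => if j == a then 'X_b else 'X_j) p.

Lemma substX a b j : subst a b 'X_j = if j == a then 'X_b else 'X_j.
Proof. by rewrite /subst mmapX mmap1U. Qed.

Lemma substB a b : {morph subst a b : x y / x - y}.
Proof. exact: mmapB. Qed.
Lemma substD a b : {morph subst a b : x y / x + y}.
Proof. exact: mmapD. Qed.
Lemma substM a b : {morph subst a b : x y / x * y}.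
Proof. move=> x y; exact: (mmap_is_multiplicative _ (@mpolyC n CC)).1. Qed.
Lemma subst1 a b : subst a b 1 = 1.
Proof. exact: (mmap_is_multiplicative _ (@mpolyC n CC)).2. Qed.
Lemma substC a b (x : CC) : subst a b x%:MP = x%:MP.
Proof. by rewrite /subst mmapC. Qed.
Lemma subst0 a b : subst a b 0 = 0.
Proof. exact: mmap0. Qed.
End PolyFacts.


Section K.
Variable n : nat.
Variables a b : 'I_n.
Definition KP (p : Pol n) := exists q, p - subst a b p = ('X_a - 'X_b) * q.

Lemma KD x y : KP x -> KP y -> KP (x + y).
Proof.
move=> [qx hx] [qy hy]; exists (qx + qy).
by rewrite substD mulrDr -hx -hy opprD addrACA.
Qed.

Lemma KM x y : KP x -> KP y -> KP (x * y).
Proof.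
move=> [qx hx] [qy hy]; exists (qx * y + subst a b x * qy).
rewrite substM mulrDr mulrA -hx mulrCA -hy.
by rewrite mulrBl mulrBr addrA subrK.
Qed.

Lemma K1 : KP 1.
Proof. by exists 0; rewrite subst1 subrr mulr0. Qed.

Lemma KC x : KP x%:MP.
Proof. by exists 0; rewrite substC subrr mulr0. Qed.

Lemma KX j : KP 'X_j.
Proof.
rewrite /KP substX; case: eqP => [->|_].
  by exists 1; rewrite mulr1.
by exists 0; rewrite subrr mulr0.
Qed.

Lemma KXn j e : KP ('X_j ^+ e).
Proof. elim: e => [|e IH]; first by rewrite expr0; apply: K1. rewrite exprS; apply: KM; [exact: KX| exact: IH]. Qed.

Lemma Kall p : KP p.
Proof.
elim/mpolyind: p => [|c m p _ _ IH].
  by exists 0; rewrite subst0 subrr mulr0.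
apply: KD; last exact: IH. rewrite -mul_mpolyC; apply: KM; first exact: KC.
rewrite mpolyXE_id; apply: (big_ind KP); [exact: K1| exact: KM|].
move=> i _; exact: KXn.
Qed.
End K.

Lemma dvd_cancel n (a b c d : 'I_n) (r q : Pol n) :
  a != b -> c != d -> ~~ ((c == a) && (d == b)) -> ~~ ((c == b) && (d == a)) ->
  ('X_c - 'X_d) * r = ('X_a - 'X_b) * q -> exists q', r = ('X_a - 'X_b) * q'.
Proof.
move=> ab cd h1 h2 e.
have := congr1 (subst a b) e; rewrite !substM !substB !substX eqxx if_same subrr mul0r.
have nz : ((if c == a then 'X_b else 'X_c) - (if d == a then 'X_b else 'X_d) : Pol n) != 0.
  case: (eqVneq c a) => [ca|ca]; case: (eqVneq d a) => [da|da].
  - by move: cd; rewrite ca da eqxx.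
  - apply: XB_neq0; apply/eqP => bd; move: h1; by rewrite ca bd !eqxx.
  - apply: XB_neq0; apply/eqP => cb; move: h2; by rewrite da cb !eqxx.
  - exact: XB_neq0.
move/eqP; rewrite mulf_eq0 (negbTE nz) /= => /eqP r0.
have [q' hq'] := Kall a b r; exists q'; by rewrite -hq' r0 subr0.
Qed.


Section Sat.
Variable n : nat.
Implicit Types (a b c d : 'I_n) (f g h : Hfun n) (v w : {perm 'I_n}).

Lemma pcompA v x y : pcomp (pcomp v x) y = pcomp v (pcomp x y).
Proof. by rewrite /pcomp mulgA. Qed.

Lemma pcompTT v a b : pcomp (pcomp v (tperm a b)) (tperm a b) = v.
Proof. by rewrite /pcomp mulgA -{1}(tpermV a b) mulVg mul1g. Qed.

Lemma pcomp_conj v t a b c d : t = tperm c d ->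
  pcomp (pcomp v (tperm (t a) (t b))) t = pcomp (pcomp v t) (tperm a b).
Proof.
move=> ->; rewrite -tpermJ conjgE tpermV /pcomp !mulgA.
by rewrite tperm2 mul1g.
Qed.

Lemma sat_iff a b f : sat_cond a b f <->
  (forall v, exists q, f v - f (pcomp v (tperm a b)) = ('X_(v a) - 'X_(v b)) * q).
Proof.
split.
  move=> [g hg] v; exists (g v); move: (hg v); by rewrite /star tpermV.
move=> H; have [g hg] := fin_all_exists H; exists g => v.
by rewrite /star tpermV hg.
Qed.

Lemma sat_ext a b f g : (forall v, f v = g v) -> sat_cond a b f -> sat_cond a b g.
Proof.
move=> e /sat_iff H; apply/sat_iff => v; have [q hq] := H v; exists q.
by rewrite -!e.
Qed.

Lemma sat_sym a b f : sat_cond a b f -> sat_cond b a f.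
Proof.
move/sat_iff => H; apply/sat_iff => v; have [q hq] := H v; exists (- q).
by rewrite tpermC hq mulrN -mulNr opprB.
Qed.

Lemma tperm_eq a b c d : a != b -> tperm a b = tperm c d ->
  (a = c /\ b = d) \/ (a = d /\ b = c).
Proof.
move=> ab e; have := congr1 (fun p : {perm 'I_n} => p a) e => /=.
rewrite tpermL; case: tpermP => [ac|ad|ac ad].
- by move=> ->; left.
- by move=> ->; right.
- by move=> ba; move: ab; rewrite ba eqxx.
Qed.

Lemma sat_tperm a b c d f : a != b -> tperm a b = tperm c d ->
  sat_cond c d f -> sat_cond a b f.
Proof.
move=> ab /(tperm_eq ab) [[-> ->]|[-> ->]] //; exact: sat_sym.
Qed.

Lemma sat_D a b f g : sat_cond a b f -> sat_cond a b g ->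
  sat_cond a b (fun v => f v + g v).
Proof.
move=> /sat_iff Hf /sat_iff Hg; apply/sat_iff => v.
have [q1 h1] := Hf v; have [q2 h2] := Hg v; exists (q1 + q2).
by rewrite mulrDr -h1 -h2 opprD addrACA.
Qed.

Lemma sat_B a b f g : sat_cond a b f -> sat_cond a b g ->
  sat_cond a b (fun v => f v - g v).
Proof.
move=> /sat_iff Hf /sat_iff Hg; apply/sat_iff => v.
have [q1 h1] := Hf v; have [q2 h2] := Hg v; exists (q1 - q2).
rewrite mulrBr -h1 -h2; ring.
Qed.

Lemma sat_M a b f g : sat_cond a b f -> sat_cond a b g ->
  sat_cond a b (fun v => f v * g v).
Proof.
move=> /sat_iff Hf /sat_iff Hg; apply/sat_iff => v.
have [q1 h1] := Hf v; have [q2 h2] := Hg v.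
exists (q1 * g v + f (pcomp v (tperm a b)) * q2).
rewrite mulrDr mulrA -h1 mulrCA -h2.
by rewrite mulrBl mulrBr addrA subrK.
Qed.

Lemma sat_const a b (p : Pol n) : sat_cond a b (fun _ => p).
Proof. apply/sat_iff => v; exists 0; by rewrite subrr mulr0. Qed.

Lemma sat_x a b j : sat_cond a b (xfun j).
Proof.
apply/sat_iff => v; rewrite /xfun pcompE.
case: tpermP => [->|->|_ _].
- by exists 1; rewrite mulr1.
- by exists (-1); rewrite mulrN1 opprB.
- by exists 0; rewrite subrr mulr0.
Qed.

Lemma sat_star a b c d f : sat_cond a b f ->
  sat_cond (tperm c d a) (tperm c d b) (star f (tperm c d)).
Proof.
move/sat_iff => H; apply/sat_iff => v; rewrite /star tpermV.
rewrite (pcomp_conj _ _ _ (erefl (tperm c d))).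
have [q hq] := H (pcomp v (tperm c d)); exists q.
by rewrite hq !pcompE.
Qed.

Lemma sat_dot a b f w : sat_cond a b f -> sat_cond a b (dot w f).
Proof.
move/sat_iff => H; apply/sat_iff => v; rewrite /dot.
have [q hq] := H (pcomp w^-1 v); exists (msym w q).
rewrite -pcompA -msymB hq msymM msymB !msymXi !pcompE.
by rewrite !permKV.
Qed.

Lemma star_dot w f t v : star (dot w f) t v = dot w (star f t) v.
Proof. by rewrite /star /dot pcompA. Qed.

End Sat.


Section Sub.
Variable n : nat.
Implicit Types (a b c d : 'I_n) (f g h : Hfun n) (v w : {perm 'I_n}).

Lemma star_sub (D : {set {perm 'I_n}}) (t : {perm 'I_n}) : dot_submodule (inHD_star D t).
Proof.
split.
- split; last by [].
  move=> sigma a b _ _ _; exact: sat_const.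
- move=> f g [Hf Sf] [Hg Sg]; split.
    move=> sigma a b hs ab e; apply: sat_D; [exact: (Hf sigma) | exact: (Hg sigma)].
  move=> v; rewrite /star; congr (_ + _); [exact: Sf | exact: Sg].
- move=> p f [Hf Sf]; split.
    move=> sigma a b hs ab e; apply: (sat_M (sat_const _ _ _)); exact: (Hf sigma).
  move=> v; rewrite /star; congr (_ * _); exact: Sf.
- move=> w f [Hf Sf]; split.
    move=> sigma a b hs ab e; apply: sat_dot; exact: (Hf sigma).
  move=> v; rewrite star_dot /dot; congr (msym w _); exact: Sf.
Qed.

Lemma xdiff_sub (p q : 'I_n) (A : Hfun n -> Prop) : dot_submodule A -> dot_submodule (xdiff_mul p q A).
Proof.
move=> [A0 AD AM Adot]; split.
- exists (fun _ => 0); split; first exact: A0.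
  by move=> v; rewrite mulr0.
- move=> f g [h1 [H1 E1]] [h2 [H2 E2]]; exists (fun v => h1 v + h2 v); split.
    exact: AD.
  by move=> v; rewrite E1 E2 mulrDr.
- move=> r f [h1 [H1 E1]]; exists (fun v => r * h1 v); split.
    exact: AM.
  by move=> v; rewrite E1 mulrCA.
- move=> w f [h1 [H1 E1]]; exists (dot w h1); split.
    exact: Adot.
  move=> v; rewrite /dot E1 msymM msymB !msymXi /xfun !pcompE !permKV.
  done.
Qed.

End Sub.


Section Main.
Variable n : nat.
Implicit Types (a b c d : 'I_n) (f g h : Hfun n) (v w : {perm 'I_n}).

Lemma sconjE a b c d : sconj (tperm a b) (tperm c d) = tperm (tperm a b c) (tperm a b d).
Proof. by rewrite -tpermJ conjgE tpermV /sconj mulgA. Qed.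

Lemma sat_cancel i i1 a b h : i != i1 -> a != b -> tperm a b != tperm i i1 ->
  sat_cond a b (fun v => (xfun i v - xfun i1 v) * h v) -> sat_cond a b h.
Proof.
move=> ii1 ab tne /sat_iff H; apply/sat_iff => v.
have /sat_iff HE := sat_B (sat_x a b i) (sat_x a b i1).
have [q hq] := H v; have [r hr] := HE v.
move: hq hr; rewrite /xfun => hq hr.
have inj := @perm_inj _ v.
have [q' hq'] : exists q', h v - h (pcomp v (tperm a b)) = ('X_(v a) - 'X_(v b)) * q'.
  apply: (@dvd_cancel _ (v a) (v b) (v i) (v i1) _ (q - r * h (pcomp v (tperm a b)))).
  - by rewrite (inj_eq inj).
  - by rewrite (inj_eq inj).
  - rewrite !(inj_eq inj); apply/negP => /andP [/eqP ia /eqP ib].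
    by move: tne; rewrite ia ib eqxx.
  - rewrite !(inj_eq inj); apply/negP => /andP [/eqP ia /eqP ib].
    by move: tne; rewrite ia ib tpermC eqxx.
  - rewrite [RHS]mulrBr [in RHS]mulrA -hq -hr; ring.
by exists q'.
Qed.


Lemma main_gen (i i1 p q : 'I_n) (C : {set {perm 'I_n}}) (tau : {perm 'I_n}) :
  i != i1 -> p != q -> tau = tperm p q ->
  tperm i i1 \in C -> tau \in C ->
  (forall a b, a != b -> tperm a b \in C ->
     sconj (tperm i i1) (tperm a b) \notin C -> tperm a b = tau) ->
  (forall v, ('X_(v p) - 'X_(v q)) - ('X_(v (tperm i i1 p)) - 'X_(v (tperm i i1 q)))
             = 'X_(v i) - 'X_(v i1) :> Pol n) ->
  internal_direct_sum (inHD C)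
       (inHD_star (sconj (tperm i i1) tau |: C) (tperm i i1))
       (xdiff_mul p q (inHD_star (C :\ tau) (tperm i i1))).
Proof.
move=> ii1 pq etau hsC htauC huniq He.
set s := tperm i i1.
have Einj v a b : a != b -> v a != v b by move=> ab; rewrite (inj_eq perm_inj).
have EX v : ('X_(v i) - 'X_(v i1) : Pol n) != 0 by apply: XB_neq0; apply: Einj.
have Bsub : forall h, inHD_star (C :\ tau) s h ->
    inHD C (fun v => (xfun p v - xfun q v) * h v).
  move=> h [Hh Sh] sigma a b hsig ab esig.
  case: (eqVneq (tperm a b) tau) => [eab|neab].
    apply: (sat_tperm ab (etrans eab etau)).
    apply/sat_iff => v; exists (h v + h (pcomp v (tperm p q))).
    rewrite /xfun !pcompE tpermL tpermR; ring.
  have hC : tperm a b \in C :\ tau by rewrite in_setD1 neab -esig hsig.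
  apply: sat_M; first exact: (sat_B (sat_x a b p) (sat_x a b q)).
  exact: (Hh (tperm a b)).
split.
- exact: star_sub.
- apply: xdiff_sub; exact: star_sub.
- move=> f; split.
  + move=> Hf.
    have Hs : sat_cond i i1 f by apply: (Hf s).
    have [h0 hh0] := Hs.
    have hh v : f v - f (pcomp v s) = ('X_(v i) - 'X_(v i1)) * h0 v.
      by move: (hh0 v); rewrite /star /s tpermV.
    have h0s v : h0 (pcomp v s) = h0 v.
      have e1 := hh v; have e2 := hh (pcomp v s).
      rewrite /s pcompTT !pcompE tpermL tpermR in e2.
      apply/eqP; rewrite -subr_eq0; apply/eqP.
      apply: (mulfI (EX v)); rewrite mulr0 mulrBr -e1.
      have -> : ('X_(v i) - 'X_(v i1)) * h0 (pcomp v s) =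
                - (('X_(v i1) - 'X_(v i)) * h0 (pcomp v s)) by ring.
      rewrite -e2; ring.
    have Hh0 : inHD_star (C :\ tau) s h0.
      split; last by move=> v; rewrite /star /s tpermV; apply: h0s.
      move=> sigma a b hsig ab esig; subst sigma.
      move: hsig; rewrite in_setD1 => /andP [neab hab].
      case: (eqVneq (tperm a b) s) => [eabs|neabs].
        apply: (sat_tperm ab eabs); apply/sat_iff => v; exists 0.
        by rewrite h0s subrr mulr0.
      have hconj : sconj s (tperm a b) \in C.
        apply/negPn/negP => hn; move: neab; by rewrite (huniq a b ab hab hn) eqxx.
      move: hconj; rewrite /s sconjE => hconj.
      have sab : tperm i i1 a != tperm i i1 b by rewrite (inj_eq perm_inj).
      have H1 := Hf _ _ _ hconj sab (erefl _).
      have H2 := sat_star i i1 H1; rewrite !tpermK in H2.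
      have H3 := sat_B (Hf _ _ _ hab ab (erefl _)) H2.
      apply: (sat_cancel ii1 ab neabs).
      apply: sat_ext H3 => v; rewrite /star /s tpermV hh //.
    pose g := fun v => f v - (xfun p v - xfun q v) * h0 v.
    have gC : inHD C g.
      move=> sigma a b hsig ab esig.
      apply: (sat_B (Hf _ _ _ hsig ab esig)); exact: (Bsub h0 Hh0 _ _ _ hsig ab esig).
    have gs v : g (pcomp v s) = g v.
      rewrite /g /xfun !pcompE h0s.
      have e1 := hh v; have e2 := He v; rewrite -/s in e2.
      have -> : f (pcomp v s) = f v - ('X_(v i) - 'X_(v i1)) * h0 v by rewrite -e1; ring.
      have -> : ('X_(v (s p)) - 'X_(v (s q)) : Pol n) =
                ('X_(v p) - 'X_(v q)) - ('X_(v i) - 'X_(v i1)) by rewrite -e2; ring.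
      ring.
    exists g, (fun v => (xfun p v - xfun q v) * h0 v); split.
    * split; last by move=> v; rewrite /star /s tpermV; apply: gs.
      move=> sigma a b hsig ab esig; subst sigma.
      case/setU1P: hsig => [etab|hab]; last exact: (gC _ _ _ hab ab (erefl _)).
      have Hpq : sat_cond p q g by apply: (gC tau p q htauC pq etau).
      have H2 := sat_star i i1 Hpq.
      have H3 : sat_cond (tperm i i1 p) (tperm i i1 q) g.
        apply: sat_ext H2 => v; rewrite /star /s tpermV; apply: gs.
      apply: (sat_tperm ab _ H3); by rewrite etab etau sconjE.
    * by exists h0.
    * move=> v; rewrite /g; ring.
  + move=> [g [h [[Hg Sg] [h' [Hh' Eh]] Ef]]].
    move=> sigma a b hsig ab esig.
    apply: sat_ext; first by move=> v; rewrite Ef Eh.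
    apply: sat_D.
      apply: (Hg sigma) => //; exact: setU1r.
    exact: (Bsub h' Hh' sigma a b hsig ab esig).
- move=> f [Hf Sf] [h [[Hh Sh] Eh]] v.
  have e1 : f (pcomp v s) = f v by move: (Sf v); rewrite /star /s tpermV.
  have e2 : h (pcomp v s) = h v by move: (Sh v); rewrite /star /s tpermV.
  have e3 := Eh (pcomp v s); rewrite e1 e2 /xfun !pcompE in e3.
  have e4 := He v; rewrite -/s in e4.
  have : ('X_(v i) - 'X_(v i1)) * h v = 0.
    have e5 := Eh v; rewrite /xfun in e5.
    by rewrite -e4 mulrBl -e5 -e3 subrr.
  move/eqP; rewrite mulf_eq0 (negbTE (EX v)) /= => /eqP h0.
  by rewrite Eh h0 mulr0.
Qed.

End Main.


Unset Implicit Arguments.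
Theorem theorem2 (n : nat) (i i1 : 'I_n) (hi1 : nat_of_ord i1 = (nat_of_ord i).+1)
  (C : {set {perm 'I_n}}) (tau : {perm 'I_n})
  (hCtr : forall sigma, sigma \in C -> is_transposition sigma)
  (hsC : tperm i i1 \in C)
  (htauC : tau \in C)
  (htauC' : sconj (tperm i i1) tau \notin C)
  (htau_uniq : forall sigma, is_transposition sigma -> sigma \in C ->
                 sconj (tperm i i1) sigma \notin C -> sigma = tau) :
  (forall k : 'I_n, tau = tperm i k ->
     internal_direct_sum (inHD C)
       (inHD_star (sconj (tperm i i1) tau |: C) (tperm i i1))
       (xdiff_mul i k (inHD_star (C :\ tau) (tperm i i1))))
  /\
  (~ (exists k : 'I_n, tau = tperm i k) ->
     exists k : 'I_n, tau = tperm i1 k /\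
     internal_direct_sum (inHD C)
       (inHD_star (sconj (tperm i i1) tau |: C) (tperm i i1))
       (xdiff_mul k i1 (inHD_star (C :\ tau) (tperm i i1)))).
Proof.
have ii1 : i != i1 by apply/eqP => e; move: hi1; rewrite e => /eqP; rewrite ltn_eqF.
have huniq : forall a b, a != b -> tperm a b \in C ->
     sconj (tperm i i1) (tperm a b) \notin C -> tperm a b = tau.
  move=> a b ab hab hn; apply: htau_uniq => //; by exists a, b.
have [a0 [b0 [ab0 etau0]]] := hCtr _ htauC.
have tau_ne1 : forall k, tau = tperm i1 k -> k != i1.
  move=> k ek; apply/eqP => ki; move: ek; rewrite ki tperm1 => e1.
  move: ab0; have := congr1 (fun p : {perm 'I_n} => p a0) etau0.
  by rewrite e1 perm1 tpermL => ->; rewrite eqxx.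
have tau_ne1' : forall k, tau = tperm i k -> k != i.
  move=> k ek; apply/eqP => ki; move: ek; rewrite ki tperm1 => e1.
  move: ab0; have := congr1 (fun p : {perm 'I_n} => p a0) etau0.
  by rewrite e1 perm1 tpermL => ->; rewrite eqxx.
have tau_ne_s : tau != tperm i i1.
  apply/eqP => e; move: htauC'; rewrite e sconjE tpermL tpermR tpermC hsC //.
split.
- move=> k ek.
  have ki := tau_ne1' k ek.
  have ki1 : k != i1 by apply/eqP => e; move: tau_ne_s; rewrite ek e eqxx.
  apply: (main_gen ii1 _ ek hsC htauC huniq).
    by rewrite eq_sym.
  move=> v; rewrite tpermL tpermD; [ring | by rewrite eq_sym | by rewrite eq_sym].
- move=> nex.
  have hk : exists k, tau = tperm i1 k.
    case: (eqVneq a0 i) => [ea|na]; first by case: nex; exists b0; rewrite etau0 ea.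
    case: (eqVneq b0 i) => [eb|nb]; first by case: nex; exists a0; rewrite etau0 eb tpermC.
    case: (eqVneq a0 i1) => [ea|na1]; first by exists b0; rewrite etau0 ea.
    case: (eqVneq b0 i1) => [eb|nb1]; first by exists a0; rewrite etau0 eb tpermC.
    have ea : tperm i i1 a0 = a0 by apply: tpermD; rewrite eq_sym.
    have eb : tperm i i1 b0 = b0 by apply: tpermD; rewrite eq_sym.
    move: htauC'; rewrite etau0 sconjE ea eb -etau0 htauC //.
  have [k ek] := hk.
  exists k; split; first exact: ek.
  have ki1 := tau_ne1 k ek.
  have ki : k != i by apply/eqP => e; case: nex; exists i1; rewrite ek e tpermC.
  have ek' : tau = tperm k i1 by rewrite ek tpermC.
  apply: (main_gen ii1 ki1 ek' hsC htauC huniq).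
  move=> v; rewrite tpermR (tpermD (z:=k)); [ring | by rewrite eq_sym | by rewrite eq_sym].
Qed.
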